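(* Let $l\in\mathbb N$, $0\le\rho,\delta\le1$, $m\in\mathbb R$, $\tilde m\in\mathbb N_0$, $0<\tau<1$, $M\in\mathbb N_0\cup\{\infty\}$ with $M\ge n+4$, and $a\in C^{\tilde m,\tau}S^m_{\rho,\delta}(\mathbb R^n\times\mathbb R^n;M;\mathscr L(\mathbb C^l))$. Assume that for every $\alpha$ with $|\alpha|\le n+3$ and every $\xi$ the limit $\lim_{|x|\to\infty}\partial_\xi^\alpha a(x,\xi)=\partial_\xi^\alpha a(\infty,\xi)$ exists, where $a(\infty,\xi):=\lim_{|x|\to\infty}a(x,\xi)$, and that $$\sup_{\xi\in\mathbb R^n}\|a(x,\xi)-a(\infty,\xi)\|_{\mathscr L(\mathbb C^l)}\langle\xi\rangle^{-m}\to0\quad(|x|\to\infty).$$ Then for every $\alpha$ with $|\alpha|\le n+2$, $\|\partial_\xi^\alpha a(x,\xi)-\partial_\xi^\alpha a(\infty,\xi)\|_{\mathscr L(\mathbb C^l)}\langle\xi\rangle^{-m+\rho|\alpha|}\to0$ as $|x|\to\infty$, uniformly in $\xi\in\mathbb R^n$.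
   Context: $\langle\xi\rangle=(1+|\xi|^2)^{1/2}$, $\mathscr L(\mathbb C^l)\cong\mathbb C^{l\times l}$. Hölder norm $\|f\|_{C^{\tilde m,\tau}}=\max_{|\beta|\le\tilde m}\big(\sup|\partial^\beta f|+\sup_{x\ne y}|\partial^\beta f(x)-\partial^\beta f(y)|/|x-y|^\tau\big)$. $C^{\tilde m,\tau}S^m_{\rho,\delta}(\mathbb R^n\times\mathbb R^n;M;\mathscr L(\mathbb C^l))$: $a:\mathbb R^{2n}\to\mathbb C^{l\times l}$ with, for $|\beta|\le\tilde m$, $|\alpha|\le M$: $\partial_x^\beta a(x,\cdot)\in C^M$; $\partial_x^\beta\partial_\xi^\alpha a$ continuous; $\|\partial_\xi^\alpha a(x,\xi)\|\le C_\alpha\langle\xi\rangle^{m-\rho|\alpha|}$; $\|\partial_\xi^\alpha a(\cdot,\xi)\|_{C^{\tilde m,\tau}}\le C_\alpha\langle\xi\rangle^{m-\rho|\alpha|+\delta(\tilde m+\tau)}$. *)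

(* Defs.v *)
From Stdlib Require Import Reals List.
Open Scope R_scope.

Fixpoint rsum (k : nat) (f : nat -> R) : R :=
  match k with O => 0 | S k' => rsum k' f + f k' end.

(** Points of R^n: real sequences vanishing from index n on. *)
Definition vec := nat -> R.
Definition inRn (n : nat) (x : vec) : Prop := forall i, (n <= i)%nat -> x i = 0.
Definition vadd (x y : vec) : vec := fun i => x i + y i.
Definition vsub (x y : vec) : vec := fun i => x i - y i.
Definition vscale (t : R) (x : vec) : vec := fun i => t * x i.
Definition ej (j : nat) : vec := fun i => if Nat.eqb i j then 1 else 0.
Definition vnorm (n : nat) (x : vec) : R := sqrt (rsum n (fun i => x i ^ 2)).
Definition jb (n : nat) (xi : vec) : R := sqrt (1 + vnorm n xi ^ 2).

(** Complex numbers as pairs (re, im); l x l complex matrices (entries i,j < l). *)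
Definition Cx := (R * R)%type.
Definition cadd (z w : Cx) : Cx := (fst z + fst w, snd z + snd w).
Definition cmul (z w : Cx) : Cx :=
  (fst z * fst w - snd z * snd w, fst z * snd w + snd z * fst w).
Definition cabs2 (z : Cx) : R := fst z ^ 2 + snd z ^ 2.
Definition cvec := nat -> Cx.
Definition Mat := nat -> nat -> Cx.
Definition msub (A B : Mat) : Mat :=
  fun i k => (fst (A i k) - fst (B i k), snd (A i k) - snd (B i k)).
Fixpoint csum (k : nat) (f : nat -> Cx) : Cx :=
  match k with O => (0, 0) | S k' => cadd (csum k' f) (f k') end.
Definition matvec (l : nat) (A : Mat) (v : cvec) : cvec :=
  fun i => csum l (fun k => cmul (A i k) (v k)).
Definition cvnorm (l : nat) (v : cvec) : R := sqrt (rsum l (fun i => cabs2 (v i))).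
Definition opnorm_le (l : nat) (A : Mat) (c : R) : Prop :=
  forall v : cvec, cvnorm l (matvec l A v) <= c * cvnorm l v.

Definition has_partial (n l j : nat) (F G : vec -> Mat) : Prop :=
  forall y, inRn n y -> forall i k, (i < l)%nat -> (k < l)%nat ->
    derivable_pt_lim (fun t => fst (F (vadd y (vscale t (ej j))) i k)) 0 (fst (G y i k)) /\
    derivable_pt_lim (fun t => snd (F (vadd y (vscale t (ej j))) i k)) 0 (snd (G y i k)).

(** Iterated partial derivatives along a list of directions (first the head). *)
Fixpoint has_iter (n l : nat) (ds : list nat) (F G : vec -> Mat) : Prop :=
  match ds with
  | nil => forall y, inRn n y -> forall i k, (i < l)%nat -> (k < l)%nat -> G y i k = F y i k
  | j :: ds' => exists F', has_partial n l j F F' /\ has_iter n l ds' F' G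
  end.

(** Multi-indices alpha in N_0^n (entries alpha i for i < n). *)
Definition mi_list (n : nat) (alpha : nat -> nat) : list nat :=
  flat_map (fun i => repeat i (alpha i)) (seq 0 n).
Definition mi_abs (n : nat) (alpha : nat -> nat) : nat :=
  fold_right Nat.add 0%nat (map alpha (seq 0 n)).
Definition mi_zero : nat -> nat := fun _ => 0%nat.

Definition Dv (n l : nat) (alpha : nat -> nat) (F G : vec -> Mat) : Prop :=
  has_iter n l (mi_list n alpha) F G.
Definition DXi (n l : nat) (alpha : nat -> nat) (a b : vec -> vec -> Mat) : Prop :=
  forall x, inRn n x -> Dv n l alpha (a x) (b x).
Definition DX (n l : nat) (beta : nat -> nat) (a b : vec -> vec -> Mat) : Prop :=
  forall xi, inRn n xi -> Dv n l beta (fun x => a x xi) (fun x => b x xi).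

(** M in N_0 \cup {oo}: None = oo. *)
Definition leM (k : nat) (M : option nat) : Prop :=
  match M with None => True | Some M' => (k <= M')%nat end.

Definition continuous_Rn (n l : nat) (G : vec -> Mat) : Prop :=
  forall y, inRn n y -> forall eps, 0 < eps -> exists d, 0 < d /\
    forall y', inRn n y' -> vnorm n (vsub y' y) < d -> opnorm_le l (msub (G y') (G y)) eps.

Definition continuous_R2n (n l : nat) (G : vec -> vec -> Mat) : Prop :=
  forall x xi, inRn n x -> inRn n xi -> forall eps, 0 < eps -> exists d, 0 < d /\
    forall x' xi', inRn n x' -> inRn n xi' ->
      vnorm n (vsub x' x) + vnorm n (vsub xi' xi) < d ->
      opnorm_le l (msub (G x' xi') (G x xi)) eps.

Definition CM (n l : nat) (M : option nat) (F : vec -> Mat) : Prop :=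
  forall ds : list nat, Forall (fun j => (j < n)%nat) ds -> leM (length ds) M ->
    exists G, has_iter n l ds F G /\ continuous_Rn n l G.

Definition holder_le (n l mt : nat) (tau : R) (f : vec -> Mat) (K : R) : Prop :=
  forall beta, (mi_abs n beta <= mt)%nat ->
    exists g S1 S2, Dv n l beta f g /\ S1 + S2 <= K /\
      (forall x, inRn n x -> opnorm_le l (g x) S1) /\
      (forall x y, inRn n x -> inRn n y -> x <> y ->
         opnorm_le l (msub (g x) (g y)) (S2 * Rpower (vnorm n (vsub x y)) tau)).

Definition symbol_class (n l mt : nat) (tau m rho delta : R) (M : option nat)
    (a : vec -> vec -> Mat) : Prop :=
  (forall beta, (mi_abs n beta <= mt)%nat ->
     exists b, DX n l beta a b /\ forall x, inRn n x -> CM n l M (b x)) /\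
  (forall beta alpha, (mi_abs n beta <= mt)%nat -> leM (mi_abs n alpha) M ->
     exists c d, DXi n l alpha a c /\ DX n l beta c d /\ continuous_R2n n l d) /\
  (forall alpha, leM (mi_abs n alpha) M ->
     exists C c, DXi n l alpha a c /\
       forall x xi, inRn n x -> inRn n xi ->
         opnorm_le l (c x xi) (C * Rpower (jb n xi) (m - rho * INR (mi_abs n alpha)))) /\
  (forall alpha, leM (mi_abs n alpha) M ->
     exists C c, DXi n l alpha a c /\
       forall xi, inRn n xi ->
         holder_le n l mt tau (fun x => c x xi)
           (C * Rpower (jb n xi) (m - rho * INR (mi_abs n alpha) + delta * (INR mt + tau)))).

(* Main.v *)
Require Import Defs.
From Stdlib Require Import Reals List.
From Stdlib Require Import Lra Lia Psatz Arith FunctionalExtensionality.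
Open Scope R_scope.

Lemma exp_le_mono x y : x <= y -> exp x <= exp y.
Proof. intros H; destruct (Rle_lt_or_eq_dec _ _ H) as [h|h]; [left; now apply exp_increasing | subst; lra]. Qed.
Lemma ln_le_mono x y : 0 < x -> x <= y -> ln x <= ln y.
Proof. intros H0 H; destruct (Rle_lt_or_eq_dec _ _ H) as [h|h]; [left; now apply ln_increasing | subst; lra]. Qed.

Lemma rsum_ext k f g : (forall i, (i < k)%nat -> f i = g i) -> rsum k f = rsum k g.
Proof. induction k; simpl; intros H; [reflexivity|]. rewrite IHk by (intros; apply H; lia). rewrite H by lia. reflexivity. Qed.
Lemma rsum_le k f g : (forall i, (i < k)%nat -> f i <= g i) -> rsum k f <= rsum k g.
Proof. induction k; simpl; intros H; [lra|]. pose proof (IHk ltac:(intros; apply H; lia)). pose proof (H k ltac:(lia)). lra. Qed.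
Lemma rsum_nonneg k f : (forall i, 0 <= f i) -> 0 <= rsum k f.
Proof. induction k; simpl; intros H; [lra|]. pose proof (IHk H). pose proof (H k). lra. Qed.
Lemma rsum_ge_term k f i : (forall i, 0 <= f i) -> (i < k)%nat -> f i <= rsum k f.
Proof. induction k; simpl; intros H Hi; [lia|]. destruct (Nat.eq_dec i k) as [->|ne].
 - pose proof (rsum_nonneg k f H). lra.
 - pose proof (IHk H ltac:(lia)). pose proof (H k). lra. Qed.
Lemma rsum_delta k f j : (j < k)%nat -> (forall i, i <> j -> f i = 0) -> rsum k f = f j.
Proof. induction k; simpl; intros Hj H; [lia|]. destruct (Nat.eq_dec j k) as [->|ne].
 - rewrite (rsum_ext k f (fun _ => 0)). 2:{ intros; apply H; lia. }
   assert (rsum k (fun _ => 0) = 0) as ->. { clear; induction k; simpl; lra. } lra.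
 - rewrite IHk by (auto; lia). rewrite (H k) by lia. lra. Qed.
Lemma rsum_scal k c f : rsum k (fun i => c * f i) = c * rsum k f.
Proof. induction k; simpl; [lra|]. rewrite IHk. ring. Qed.
Lemma rsum_plus k f g : rsum k (fun i => f i + g i) = rsum k f + rsum k g.
Proof. induction k; simpl; [lra|]. rewrite IHk. ring. Qed.
Lemma rsum_sq_le k f : (rsum k f)^2 <= INR k * rsum k (fun i => f i ^ 2).
Proof. induction k; cbn [rsum]; [simpl; lra|].
 set (S := rsum k f) in *. set (Q := rsum k (fun i => f i ^ 2)) in *. set (y := f k).
 rewrite S_INR. assert (0 <= Q) by (apply rsum_nonneg; intros; nra).
 pose proof (pos_INR k).
 assert (2 * S * y <= Q + INR k * y^2).
 { destruct (Req_dec (INR k) 0) as [e|e].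
   - rewrite e in IHk. assert (S = 0) by nra. subst S. nra.
   - assert (0 < INR k) by lra.
     pose proof (pow2_ge_0 (S - INR k * y)).
     assert (INR k * (2*S*y) <= INR k * (Q + INR k * y^2)) by nra.
     apply Rmult_le_reg_l with (INR k); lra. }
 nra. Qed.

Lemma csum_fst k f : fst (csum k f) = rsum k (fun i => fst (f i)).
Proof. induction k; simpl; [reflexivity|]. rewrite IHk; reflexivity. Qed.
Lemma csum_snd k f : snd (csum k f) = rsum k (fun i => snd (f i)).
Proof. induction k; simpl; [reflexivity|]. rewrite IHk; reflexivity. Qed.

Definition ebound (l : nat) (A : Mat) (d : R) : Prop :=
  forall i k, (i < l)%nat -> (k < l)%nat -> Rabs (fst (A i k)) <= d /\ Rabs (snd (A i k)) <= d.

Lemma sqrt_ge_abs x y : Rabs x <= sqrt (x^2 + y^2).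
Proof. rewrite <- (sqrt_pow2 (Rabs x)) by apply Rabs_pos. rewrite pow2_abs.
 apply sqrt_le_1_alt. nra. Qed.

Lemma opnorm_entries l A c : opnorm_le l A c -> ebound l A c.
Proof. intros H i k Hi Hk.
 set (v := fun k' : nat => if Nat.eqb k' k then ((1,0):Cx) else ((0,0):Cx)).
 specialize (H v).
 assert (Hv : cvnorm l v = 1).
 { unfold cvnorm. rewrite (rsum_delta l _ k Hk).
   - unfold v. rewrite Nat.eqb_refl. unfold cabs2; simpl. replace (1 * (1 * 1) + 0 * (0 * 1)) with 1 by ring. apply sqrt_1.
   - intros i' ne. unfold v. apply Nat.eqb_neq in ne. rewrite ne. unfold cabs2; simpl. ring. }
 rewrite Hv, Rmult_1_r in H.
 assert (E1 : fst (matvec l A v i) = fst (A i k)).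
 { unfold matvec. rewrite csum_fst. rewrite (rsum_delta l _ k Hk).
   - unfold v. rewrite Nat.eqb_refl. simpl. ring.
   - intros i' ne. unfold v. apply Nat.eqb_neq in ne. rewrite ne. simpl. ring. }
 assert (E2 : snd (matvec l A v i) = snd (A i k)).
 { unfold matvec. rewrite csum_snd. rewrite (rsum_delta l _ k Hk).
   - unfold v. rewrite Nat.eqb_refl. simpl. ring.
   - intros i' ne. unfold v. apply Nat.eqb_neq in ne. rewrite ne. simpl. ring. }
 assert (Hle : cabs2 (matvec l A v i) <= rsum l (fun i => cabs2 (matvec l A v i))).
 { apply (rsum_ge_term l (fun i => cabs2 (matvec l A v i))); auto. intros; unfold cabs2; nra. }
 unfold cvnorm in H.
 pose proof (sqrt_le_1_alt _ _ Hle).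
 pose proof (sqrt_ge_abs (fst (matvec l A v i)) (snd (matvec l A v i))).
 pose proof (sqrt_ge_abs (snd (matvec l A v i)) (fst (matvec l A v i))).
 unfold cabs2 in *. rewrite E1, E2 in *. split; [lra|].
 rewrite Rplus_comm in H2. lra. Qed.

Lemma ebound_opnorm l A d : 0 <= d -> ebound l A d -> opnorm_le l A (2 * INR l * d).
Proof. intros Hd H v. unfold cvnorm.
 set (S := rsum l (fun i => cabs2 (v i))).
 assert (HS : 0 <= S) by (apply rsum_nonneg; intros; unfold cabs2; nra).
 assert (Hrow : forall i, (i < l)%nat -> cabs2 (matvec l A v i) <= INR l * (2 * d^2) * S).
 { intros i Hi. unfold cabs2, matvec. rewrite csum_fst, csum_snd.
   pose proof (rsum_sq_le l (fun k => fst (cmul (A i k) (v k)))).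
   pose proof (rsum_sq_le l (fun k => snd (cmul (A i k) (v k)))).
   assert (rsum l (fun k => fst (cmul (A i k) (v k)) ^ 2) + rsum l (fun k => snd (cmul (A i k) (v k)) ^ 2)
     <= (2 * d^2) * S).
   { rewrite <- rsum_plus. unfold S. rewrite <- rsum_scal. apply rsum_le. intros k Hk.
     destruct (H i k Hi Hk) as [h1 h2]. destruct (A i k) as [p q]; destruct (v k) as [s t]; unfold cabs2; simpl in *.
          assert (p^2 <= d^2). { rewrite <- (pow2_abs p). apply pow_incr; split; [apply Rabs_pos|lra]. }
     assert (q^2 <= d^2). { rewrite <- (pow2_abs q). apply pow_incr; split; [apply Rabs_pos|lra]. }
     nra. }
   pose proof (pos_INR l). nra. }
 assert (rsum l (fun i => cabs2 (matvec l A v i)) <= (2 * INR l * d)^2 * S).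
 { apply Rle_trans with (rsum l (fun _ => INR l * (2 * d^2) * S)).
   - apply rsum_le; auto.
   - assert (forall c, rsum l (fun _ => c) = INR l * c) as ->.
     { intros c; clear; induction l; cbn [rsum]; [simpl; lra|]. rewrite IHl. rewrite S_INR. ring. }
     pose proof (pos_INR l). assert (0 <= (INR l * d)^2 * S) by (apply Rmult_le_pos; nra). nra. }
 rewrite <- (sqrt_pow2 (2 * INR l * d)) by (pose proof (pos_INR l); nra).
 rewrite <- sqrt_mult_alt by nra. apply sqrt_le_1_alt. auto. Qed.

Definition sh (y : vec) (t : R) (j : nat) : vec := vadd y (vscale t (ej j)).

Lemma inRn_shift n y t j : inRn n y -> (j < n)%nat -> inRn n (sh y t j).
Proof. intros H Hj i Hi. unfold sh, vadd, vscale, ej. rewrite H by auto.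
 destruct (Nat.eqb_spec i j); [lia|]. ring. Qed.
Lemma sh_sh y t s j : vadd (sh y t j) (vscale s (ej j)) = sh y (t + s) j.
Proof. apply functional_extensionality; intro i. unfold sh, vadd, vscale. ring. Qed.
Lemma sh0 y j : sh y 0 j = y.
Proof. apply functional_extensionality; intro i. unfold sh, vadd, vscale. ring. Qed.

Lemma rsum_shift n y t j : (j < n)%nat ->
  rsum n (fun i => sh y t j i ^ 2) = rsum n (fun i => y i ^ 2) + 2 * t * y j + t ^ 2.
Proof. induction n; intros Hj; [lia|]. cbn [rsum].
 destruct (Nat.eq_dec j n) as [->|ne].
 - rewrite (rsum_ext n _ (fun i => y i ^ 2)).
   + unfold sh, vadd, vscale, ej. rewrite Nat.eqb_refl. ring.
   + intros i Hi. unfold sh, vadd, vscale, ej. destruct (Nat.eqb_spec i n); [lia|]. ring.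
 - rewrite IHn by lia. unfold sh, vadd, vscale, ej. destruct (Nat.eqb_spec n j); [lia|]. ring. Qed.

Lemma vnorm_nonneg n y : 0 <= vnorm n y.
Proof. apply sqrt_pos. Qed.
Lemma vnorm_sq n y : vnorm n y ^ 2 = rsum n (fun i => y i ^ 2).
Proof. unfold vnorm. apply pow2_sqrt. apply rsum_nonneg; intros; nra. Qed.
Lemma jb_sq n y : jb n y ^ 2 = 1 + vnorm n y ^ 2.
Proof. unfold jb. apply pow2_sqrt. nra. Qed.
Lemma jb_ge1 n y : 1 <= jb n y.
Proof. unfold jb. apply Rle_trans with (sqrt 1); [rewrite sqrt_1; lra|]. apply sqrt_le_1_alt. pose proof (pow2_ge_0 (vnorm n y)). lra. Qed.

Lemma jb_shift n y t j : (j < n)%nat -> 0 <= t <= jb n y / 2 ->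
  jb n y / 2 <= jb n (sh y t j) <= 2 * jb n y.
Proof. intros Hj Ht.
 pose proof (jb_sq n (sh y t j)) as E1. rewrite vnorm_sq, rsum_shift in E1 by auto.
 pose proof (jb_sq n y) as E2. rewrite vnorm_sq in E2.
 pose proof (rsum_ge_term n (fun i => y i ^ 2) j ltac:(intros; nra) Hj) as E3. cbv beta in E3.
 pose proof (jb_ge1 n y). pose proof (jb_ge1 n (sh y t j)).
 set (J := jb n y) in *. set (Y := jb n (sh y t j)) in *.
 set (Sy := rsum n (fun i => y i ^ 2)) in *.
 assert (y j ^ 2 <= J ^ 2) by lra.
 assert (HJ : - J <= y j <= J) by (split; nra).
 assert (Y ^ 2 <= (J + t) ^ 2) by nra.
 assert ((J - t) ^ 2 <= Y ^ 2) by nra.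
 split; nra. Qed.

Lemma Rpower_cmp J Y p : 0 < J -> J / 2 <= Y <= 2 * J ->
  Rpower Y p <= Rpower 2 (Rabs p) * Rpower J p.
Proof. intros HJ HY. unfold Rpower. rewrite <- exp_plus. apply exp_le_mono.
 assert (ln Y <= ln 2 + ln J). { rewrite <- ln_mult by lra. apply ln_le_mono; lra. }
 assert (ln J - ln 2 <= ln Y).
 { replace (ln J - ln 2) with (ln (J / 2)). apply ln_le_mono; lra.
   unfold Rdiv. rewrite ln_mult, ln_Rinv by lra. ring. }
 pose proof ln_lt_2.
 destruct (Rle_or_lt 0 p).
 - rewrite Rabs_pos_eq by lra. nra.
 - rewrite Rabs_left by lra. nra. Qed.

Lemma Rpower_pos x p : 0 < Rpower x p.
Proof. apply exp_pos. Qed.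

Lemma vnorm_e0 n T : (1 <= n)%nat -> vnorm n (sh (fun _ => 0) T 0) = Rabs T.
Proof. intros Hn. unfold vnorm. rewrite rsum_shift by lia.
 replace (rsum n (fun _ : nat => 0 ^ 2) + 2 * T * 0 + T ^ 2) with (Rabs T ^ 2).
 - apply sqrt_pow2, Rabs_pos.
 - rewrite pow2_abs. assert (rsum n (fun _ : nat => 0 ^ 2) = 0) as ->. { clear; induction n; cbn [rsum]; [reflexivity|]. rewrite IHn. ring. } ring. Qed.

Lemma interp (phi psi chi : R -> R) r A B : 0 < r ->
  (forall t, 0 <= t <= r -> derivable_pt_lim phi t (psi t)) ->
  (forall t, 0 <= t <= r -> derivable_pt_lim psi t (chi t)) ->
  (forall t, 0 <= t <= r -> Rabs (phi t) <= A) ->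
  (forall t, 0 <= t <= r -> Rabs (chi t) <= B) ->
  Rabs (psi 0) <= 2 * A / r + r * B.
Proof. intros Hr D1 D2 HA HB.
 destruct (MVT_cor2 phi psi 0 r Hr ltac:(intros; apply D1; lra)) as [s [Es Hs]].
 destruct (MVT_cor2 psi chi 0 s ltac:(lra) ltac:(intros; apply D2; lra)) as [u [Eu Hu]].
 pose proof (HA r ltac:(lra)). pose proof (HA 0 ltac:(lra)). pose proof (HB u ltac:(lra)).
 assert (Rabs (psi s) * r <= 2 * A).
 { rewrite <- (Rabs_pos_eq r) by lra. rewrite <- Rabs_mult. replace (psi s * r) with (phi r - phi 0) by lra.
   unfold Rminus. eapply Rle_trans; [apply Rabs_triang|]. rewrite Rabs_Ropp. lra. }
 assert (Rabs (psi s) <= 2 * A / r).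
 { unfold Rdiv. apply Rmult_le_reg_r with r; auto. rewrite Rmult_assoc, Rinv_l by lra. lra. }
 assert (Rabs (chi u * (s - 0)) <= r * B).
 { rewrite Rabs_mult. rewrite (Rabs_pos_eq (s - 0)) by lra. pose proof (Rabs_pos (chi u)). nra. }
 replace (psi 0) with (psi s - chi u * (s - 0)) by lra.
 unfold Rminus at 1. eapply Rle_trans; [apply Rabs_triang|]. rewrite Rabs_Ropp. lra. Qed.

Lemma deriv_shift (f : R -> R) t l :
  derivable_pt_lim (fun s => f (t + s)) 0 l -> derivable_pt_lim f t l.
Proof. intros H eps He. destruct (H eps He) as [d Hd]. exists d. intros h Hh Hhd.
 specialize (Hd h Hh Hhd). rewrite Rplus_0_l, Rplus_0_r in Hd. exact Hd. Qed.

Definition eqon n l (F F' : vec -> Mat) : Prop :=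
  forall y, inRn n y -> forall i k, (i < l)%nat -> (k < l)%nat -> F y i k = F' y i k.

Lemma partial_uniq n l j F F' G1 G2 : (j < n)%nat ->
  has_partial n l j F G1 -> has_partial n l j F' G2 -> eqon n l F F' -> eqon n l G1 G2.
Proof. intros Hj H1 H2 E y Hy i k Hi Hk.
 destruct (H1 y Hy i k Hi Hk) as [a1 b1]. destruct (H2 y Hy i k Hi Hk) as [a2 b2].
 assert (EF : forall t, F (vadd y (vscale t (ej j))) i k = F' (vadd y (vscale t (ej j))) i k).
 { intro t. apply E; auto. apply (inRn_shift n y t j Hy Hj). }
 assert (e1 : (fun t => fst (F (vadd y (vscale t (ej j))) i k)) = (fun t => fst (F' (vadd y (vscale t (ej j))) i k))).
 { apply functional_extensionality; intro t; now rewrite EF. }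
 assert (e2 : (fun t => snd (F (vadd y (vscale t (ej j))) i k)) = (fun t => snd (F' (vadd y (vscale t (ej j))) i k))).
 { apply functional_extensionality; intro t; now rewrite EF. }
 rewrite e1 in a1. rewrite e2 in b1.
 pose proof (uniqueness_limite _ _ _ _ a1 a2). pose proof (uniqueness_limite _ _ _ _ b1 b2).
 destruct (G1 y i k), (G2 y i k). simpl in *. subst. reflexivity. Qed.

Lemma partial_congr n l j F F' G G' : (j < n)%nat ->
  has_partial n l j F G -> eqon n l F F' -> eqon n l G G' -> has_partial n l j F' G'.
Proof. intros Hj H E EG y Hy i k Hi Hk.
 destruct (H y Hy i k Hi Hk) as [a1 b1].
 assert (EF : forall t, F (vadd y (vscale t (ej j))) i k = F' (vadd y (vscale t (ej j))) i k).
 { intro t. apply E; auto. apply (inRn_shift n y t j Hy Hj). }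
 assert (e1 : (fun t => fst (F (vadd y (vscale t (ej j))) i k)) = (fun t => fst (F' (vadd y (vscale t (ej j))) i k))).
 { apply functional_extensionality; intro t; now rewrite EF. }
 assert (e2 : (fun t => snd (F (vadd y (vscale t (ej j))) i k)) = (fun t => snd (F' (vadd y (vscale t (ej j))) i k))).
 { apply functional_extensionality; intro t; now rewrite EF. }
 rewrite e1 in a1. rewrite e2 in b1. rewrite <- (EG y Hy i k Hi Hk). auto. Qed.

Lemma iter_uniq n l ds : Forall (fun j => (j < n)%nat) ds -> forall F F' G1 G2,
  has_iter n l ds F G1 -> has_iter n l ds F' G2 -> eqon n l F F' -> eqon n l G1 G2.
Proof. induction ds as [|j ds IH]; intros Hf F F' G1 G2 H1 H2 E; simpl in *.
 - intros y Hy i k Hi Hk. rewrite H1, H2 by auto. apply E; auto.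
 - inversion Hf; subst. destruct H1 as [A1 [P1 I1]]. destruct H2 as [A2 [P2 I2]].
   apply (IH H4 A1 A2); auto. apply (partial_uniq n l j F F'); auto. Qed.

Lemma iter_app n l L1 L2 : forall F G, has_iter n l (L1 ++ L2) F G ->
  exists H, has_iter n l L1 F H /\ has_iter n l L2 H G.
Proof. induction L1 as [|j L1 IH]; intros F G Hi; simpl in *.
 - exists F. split; auto.
 - destruct Hi as [F' [P I]]. destruct (IH F' G I) as [H [I1 I2]]. exists H. split; auto. exists F'. auto. Qed.

Lemma iter_one n l j H G : (j < n)%nat -> has_iter n l (j :: nil) H G -> has_partial n l j H G.
Proof. intros Hj [F' [P I]]. simpl in I. apply (partial_congr n l j H H F' G Hj P).
 - intros y Hy i k Hi Hk; reflexivity.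
 - intros y Hy i k Hi Hk. symmetry; auto. Qed.

Lemma iter_two n l j H G : (j < n)%nat -> has_iter n l (j :: j :: nil) H G ->
  exists F1, has_partial n l j H F1 /\ has_partial n l j F1 G.
Proof. intros Hj [F' [P I]]. exists F'. split; auto. apply iter_one; auto. Qed.

Open Scope nat_scope.

Lemma mi_list_S n a : mi_list (S n) a = mi_list n a ++ repeat n (a n).
Proof. unfold mi_list. rewrite seq_S, flat_map_app. simpl. rewrite app_nil_r. reflexivity. Qed.
Lemma fold_add c l : fold_right Nat.add c l = (c + fold_right Nat.add 0 l)%nat.
Proof. induction l; simpl; lia. Qed.
Lemma mi_abs_S n a : mi_abs (S n) a = (mi_abs n a + a n)%nat.
Proof. unfold mi_abs. rewrite seq_S, map_app, fold_right_app. simpl. rewrite fold_add. lia. Qed.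
Lemma mi_list_ext n a b : (forall i, i < n -> a i = b i) -> mi_list n a = mi_list n b.
Proof. induction n; intros H; [reflexivity|]. rewrite !mi_list_S, IHn, H by (auto; lia). reflexivity. Qed.
Lemma mi_abs_ext n a b : (forall i, i < n -> a i = b i) -> mi_abs n a = mi_abs n b.
Proof. induction n; intros H; [reflexivity|]. rewrite !mi_abs_S, IHn, H by (auto; lia). reflexivity. Qed.
Lemma mi_list_lt n a : Forall (fun j => j < n) (mi_list n a).
Proof. apply Forall_forall. intros x Hx. unfold mi_list in Hx. apply in_flat_map in Hx.
 destruct Hx as [i [Hi Hx]]. apply repeat_spec in Hx. apply in_seq in Hi. lia. Qed.
Lemma mi_abs0 n a : mi_abs n a = 0 -> mi_list n a = nil.
Proof. induction n; intros H; [reflexivity|]. rewrite mi_abs_S in H. rewrite mi_list_S, IHn by lia.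
 replace (a n) with 0 by lia. reflexivity. Qed.
Lemma find_top n a : 0 < mi_abs n a -> exists j, j < n /\ 0 < a j /\ forall i, j < i < n -> a i = 0.
Proof. induction n; intros H; [unfold mi_abs in H; simpl in H; lia|]. rewrite mi_abs_S in H.
 destruct (Nat.eq_dec (a n) 0) as [e|e].
 - destruct (IHn ltac:(lia)) as [j [h1 [h2 h3]]]. exists j. split; [lia|]. split; auto.
   intros i Hi. destruct (Nat.eq_dec i n) as [->|]; auto. apply h3; lia.
 - exists n. split; [lia|]. split; [lia|]. intros; lia. Qed.

Definition incr (a : nat -> nat) (j : nat) : nat -> nat := fun i => if Nat.eqb i j then S (a j) else a i.

Lemma mi_incr n a j : j < n -> (forall i, j < i < n -> a i = 0) ->
  mi_list n (incr a j) = mi_list n a ++ j :: nil /\ mi_abs n (incr a j) = S (mi_abs n a).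
Proof. induction n; intros Hj H; [lia|]. rewrite !mi_list_S, !mi_abs_S.
 destruct (Nat.eq_dec j n) as [->|ne].
 - rewrite (mi_list_ext n (incr a n) a), (mi_abs_ext n (incr a n) a).
   2,3: intros i Hi; unfold incr; destruct (Nat.eqb_spec i n); [lia|reflexivity].
   unfold incr. rewrite Nat.eqb_refl. simpl. rewrite <- app_assoc. simpl. rewrite repeat_cons. split; [reflexivity|lia].
 - destruct (IHn ltac:(lia) ltac:(intros; apply H; lia)) as [e1 e2]. rewrite e1, e2.
   assert (incr a j n = 0) as ->. { unfold incr. destruct (Nat.eqb_spec n j); [lia|]. apply H; lia. } rewrite (H n) by lia. simpl.
   rewrite !app_nil_r. split; [reflexivity|lia]. Qed.

Lemma decomp n a k : mi_abs n a = S k -> exists j a', j < n /\ mi_abs n a' = k /\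
  mi_list n a = mi_list n a' ++ j :: nil /\
  mi_list n (incr a j) = mi_list n a' ++ j :: j :: nil /\ mi_abs n (incr a j) = S (S k).
Proof. intros H. destruct (find_top n a ltac:(lia)) as [j [h1 [h2 h3]]].
 set (a' := fun i => if Nat.eqb i j then pred (a j) else a i).
 assert (za' : forall i, j < i < n -> a' i = 0).
 { intros i Hi. unfold a'. destruct (Nat.eqb_spec i j); [lia|]. auto. }
 assert (Ea : incr a' j = a).
 { apply functional_extensionality; intro i. unfold incr, a'. rewrite Nat.eqb_refl.
   destruct (Nat.eqb_spec i j); [subst; lia|reflexivity]. }
 destruct (mi_incr n a' j h1 za') as [e1 e2]. rewrite Ea in e1, e2.
 destruct (mi_incr n a j h1 h3) as [f1 f2].
 exists j, a'. split; auto. split; [lia|]. split; auto. split.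
 - rewrite f1, e1, <- app_assoc. reflexivity.
 - lia. Qed.

Open Scope R_scope.

Lemma step_analytic n l j (U V W : vec -> vec -> Mat) p1 rho C :
  (j < n)%nat -> 0 <= rho <= 1 ->
  (forall x, inRn n x -> has_partial n l j (U x) (V x)) ->
  (forall x, inRn n x -> has_partial n l j (V x) (W x)) ->
  (forall x xi, inRn n x -> inRn n xi -> ebound l (W x xi) (C * Rpower (jb n xi) (p1 - 2 * rho))) ->
  (forall eps, 0 < eps -> exists R0, forall x x', inRn n x -> inRn n x' -> R0 <= vnorm n x -> R0 <= vnorm n x' ->
     forall xi, inRn n xi -> ebound l (msub (U x xi) (U x' xi)) (eps * Rpower (jb n xi) p1)) ->
  (forall eps, 0 < eps -> exists R0, forall x x', inRn n x -> inRn n x' -> R0 <= vnorm n x -> R0 <= vnorm n x' ->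
     forall xi, inRn n xi -> ebound l (msub (V x xi) (V x' xi)) (eps * Rpower (jb n xi) (p1 - rho))).
Proof. intros Hj Hrho DU DV BW IH eps He.
 set (K1 := Rpower 2 (Rabs p1)). set (K3 := Rpower 2 (Rabs (p1 - 2 * rho))). set (C' := Rabs C + 1).
 assert (HK1 : 0 < K1) by apply Rpower_pos. assert (HK3 : 0 < K3) by apply Rpower_pos.
 assert (HC' : 0 < C') by (pose proof (Rabs_pos C); unfold C'; lra).
 set (h := Rmin (1/2) (eps / (4 * C' * K3))).
 assert (Hh0 : 0 < h). { unfold h. apply Rmin_glb_lt; [lra|]. apply Rdiv_lt_0_compat; [lra|]. nra. }
 assert (Hh1 : h <= 1/2) by apply Rmin_l.
 assert (Hh2 : h * (4 * C' * K3) <= eps).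
 { assert (h <= eps / (4 * C' * K3)) by apply Rmin_r.
   assert (0 < 4 * C' * K3) by nra.
   apply Rmult_le_compat_r with (r := 4 * C' * K3) in H; [|lra].
   replace (eps / (4 * C' * K3) * (4 * C' * K3)) with eps in H by (field; lra). lra. }
 set (e' := eps * h / (4 * K1)).
 assert (He' : 0 < e') by (unfold e'; apply Rdiv_lt_0_compat; nra).
 destruct (IH e' He') as [R0 HR]. exists R0. intros x x' Hx Hx' Rx Rx' xi Hxi i k Hi Hk.
 set (J := jb n xi). assert (HJ : 1 <= J) by apply jb_ge1.
 set (Q := Rpower J rho). set (P := Rpower J (p1 - rho)).
 assert (HQ : 0 < Q) by apply Rpower_pos. assert (HP : 0 < P) by apply Rpower_pos.
 assert (HQJ : Q <= J). { unfold Q. rewrite <- (Rpower_1 J) at 2 by lra. apply Rle_Rpower; lra. }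
 assert (E1 : Rpower J p1 = P * Q). { unfold P, Q. rewrite <- Rpower_plus. f_equal. ring. }
 assert (E3 : Rpower J (p1 - 2 * rho) * Q = P). { unfold P, Q. rewrite <- Rpower_plus. f_equal. ring. }
 set (r := h * Q). assert (Hr : 0 < r) by (unfold r; nra). assert (HrJ : r <= J / 2) by (unfold r; nra).
 assert (Gen : forall p : Cx -> R,
   (forall A B : Mat, p (msub A B i k) = p (A i k) - p (B i k)) ->
   (forall (F G : vec -> Mat) y, has_partial n l j F G -> inRn n y ->
      derivable_pt_lim (fun t => p (F (vadd y (vscale t (ej j))) i k)) 0 (p (G y i k))) ->
   (forall A d, ebound l A d -> Rabs (p (A i k)) <= d) ->
   Rabs (p (msub (V x xi) (V x' xi) i k)) <= eps * Rpower J (p1 - rho)).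
 { intros p Pm Pd Pb.
   set (phi := fun t => p (U x (sh xi t j) i k) - p (U x' (sh xi t j) i k)).
   set (psi := fun t => p (V x (sh xi t j) i k) - p (V x' (sh xi t j) i k)).
   set (chi := fun t => p (W x (sh xi t j) i k) - p (W x' (sh xi t j) i k)).
   assert (D : forall (F G : vec -> vec -> Mat), (forall x, inRn n x -> has_partial n l j (F x) (G x)) ->
      forall t, derivable_pt_lim (fun t => p (F x (sh xi t j) i k) - p (F x' (sh xi t j) i k)) t
                  (p (G x (sh xi t j) i k) - p (G x' (sh xi t j) i k))).
   { intros F G HFG t. apply deriv_shift.
     assert (Ef : (fun s => p (F x (sh xi (t + s) j) i k) - p (F x' (sh xi (t + s) j) i k)) =
        (fun s => (fun s => p (F x (vadd (sh xi t j) (vscale s (ej j))) i k)) s - (fun s => p (F x' (vadd (sh xi t j) (vscale s (ej j))) i k)) s)).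
     { apply functional_extensionality; intro s. rewrite !sh_sh. reflexivity. }
     rewrite Ef. apply (derivable_pt_lim_minus (fun s => p (F x (vadd (sh xi t j) (vscale s (ej j))) i k))
        (fun s => p (F x' (vadd (sh xi t j) (vscale s (ej j))) i k))).
     - apply Pd; [apply HFG; auto|]. apply inRn_shift; auto.
     - apply Pd; [apply HFG; auto|]. apply inRn_shift; auto. }
   assert (Hint := interp phi psi chi r (e' * K1 * Rpower J p1) (2 * C' * K3 * Rpower J (p1 - 2 * rho)) Hr
      ltac:(intros; apply (D U V DU)) ltac:(intros; apply (D V W DV))).
   assert (Hsh : forall t, 0 <= t <= r -> J / 2 <= jb n (sh xi t j) <= 2 * J).
   { intros t Ht. apply jb_shift; auto. split; [lra|]. apply Rle_trans with r; [lra|exact HrJ]. }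
   assert (HJ0 : 0 < J) by lra.
   assert (B1 : forall t, 0 <= t <= r -> Rabs (phi t) <= e' * K1 * Rpower J p1).
   { intros t Ht; unfold phi; rewrite <- Pm.
     eapply Rle_trans; [apply (Pb _ _ (HR x x' Hx Hx' Rx Rx' (sh xi t j) (inRn_shift n xi t j Hxi Hj)))|].
     rewrite Rmult_assoc; apply Rmult_le_compat_l; [lra|]; apply Rpower_cmp; auto. }
   assert (B2 : forall t, 0 <= t <= r -> Rabs (chi t) <= 2 * C' * K3 * Rpower J (p1 - 2 * rho)).
   { intros t Ht; unfold chi; unfold Rminus.
     eapply Rle_trans; [apply Rabs_triang|]; rewrite Rabs_Ropp.
     pose proof (Rpower_pos (jb n (sh xi t j)) (p1 - 2 * rho)).
     pose proof (Rabs_pos C). pose proof (Rle_abs C).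
     pose proof (Pb _ _ (BW x (sh xi t j) Hx (inRn_shift n xi t j Hxi Hj))).
     pose proof (Pb _ _ (BW x' (sh xi t j) Hx' (inRn_shift n xi t j Hxi Hj))).
     assert (C * Rpower (jb n (sh xi t j)) (p1 - 2 * rho) <= C' * (K3 * Rpower J (p1 - 2 * rho))).
     { apply Rle_trans with (C' * Rpower (jb n (sh xi t j)) (p1 - 2 * rho)); [unfold C'; nra|].
       apply Rmult_le_compat_l; [lra| apply Rpower_cmp; auto]. }
     replace (p1 + - (2 * rho)) with (p1 - 2 * rho) by ring. lra. }
   specialize (Hint B1 B2).
   unfold psi in Hint. rewrite sh0 in Hint. rewrite Pm.
   eapply Rle_trans; [exact Hint|].
   rewrite E1. fold P.
   replace (2 * (e' * K1 * (P * Q)) / r) with (eps / 2 * P) by (unfold e', r; field; lra).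
   replace (r * (2 * C' * K3 * Rpower J (p1 - 2 * rho))) with (h * (2 * C' * K3) * P)
     by (rewrite <- E3; unfold r; ring).
   nra. }
 split.
 - apply Gen; [reflexivity| |].
   + intros F G y HFG Hy. apply (HFG y Hy i k Hi Hk).
   + intros A d Hd. apply (Hd i k Hi Hk).
 - apply Gen; [reflexivity| |].
   + intros F G y HFG Hy. apply (HFG y Hy i k Hi Hk).
   + intros A d Hd. apply (Hd i k Hi Hk). Qed.

Lemma tri x y z : Rabs (x - y) <= Rabs (x - z) + Rabs (z - y).
Proof. replace (x - y) with ((x - z) + (z - y)) by ring. apply Rabs_triang. Qed.
Lemma Rabs_sym x y : Rabs (x - y) = Rabs (y - x).
Proof. rewrite <- Rabs_Ropp. f_equal. ring. Qed.

Lemma leM_le k k' M : (k <= k')%nat -> leM k' M -> leM k M.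
Proof. destruct M; simpl; lia. Qed.

Lemma cauchy_all n l m rho (M : option nat) (a : vec -> vec -> Mat) (ainf0 : vec -> Mat) :
  0 <= rho <= 1 -> leM (n + 4) M ->
  (forall alpha, leM (mi_abs n alpha) M ->
     exists C c, DXi n l alpha a c /\
       forall x xi, inRn n x -> inRn n xi ->
         opnorm_le l (c x xi) (C * Rpower (jb n xi) (m - rho * INR (mi_abs n alpha)))) ->
  (forall eps, 0 < eps -> exists R0, forall x, inRn n x -> R0 <= vnorm n x ->
     forall xi, inRn n xi ->
       opnorm_le l (msub (a x xi) (ainf0 xi)) (eps * Rpower (jb n xi) m)) ->
  forall k, (k <= n + 2)%nat -> forall alpha, mi_abs n alpha = k -> forall G, DXi n l alpha a G ->
  forall eps, 0 < eps -> exists R0, forall x x', inRn n x -> inRn n x' -> R0 <= vnorm n x -> R0 <= vnorm n x' ->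
     forall xi, inRn n xi -> ebound l (msub (G x xi) (G x' xi)) (eps * Rpower (jb n xi) (m - rho * INR k)).
Proof. intros Hrho HM HS3 H2. induction k as [|k IHk]; intros Hk alpha Ha G DG eps He.
 - assert (HL := mi_abs0 n alpha Ha).
   destruct (H2 (eps / 2) ltac:(lra)) as [R0 HR]. exists R0.
   intros x x' Hx Hx' Rx Rx' xi Hxi i k Hi Hk'.
   pose proof (DG x Hx) as Gx. pose proof (DG x' Hx') as Gx'. unfold Dv in Gx, Gx'. rewrite HL in Gx, Gx'. simpl in Gx, Gx'.
   pose proof (opnorm_entries _ _ _ (HR x Hx Rx xi Hxi) i k Hi Hk') as [a1 b1].
   pose proof (opnorm_entries _ _ _ (HR x' Hx' Rx' xi Hxi) i k Hi Hk') as [a2 b2].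
   simpl in a1, b1, a2, b2. simpl. rewrite (Gx xi Hxi i k Hi Hk'), (Gx' xi Hxi i k Hi Hk').
   replace (m - rho * 0) with m by ring.
   split.
   + eapply Rle_trans; [apply (tri _ _ (fst (ainf0 xi i k)))|]. rewrite (Rabs_sym (fst (ainf0 xi i k))). lra.
   + eapply Rle_trans; [apply (tri _ _ (snd (ainf0 xi i k)))|]. rewrite (Rabs_sym (snd (ainf0 xi i k))). lra.
 - destruct (decomp n alpha k Ha) as [j [a' [Hj [Ha' [L1 [L2 A2]]]]]].
   destruct (HS3 a' ltac:(apply (leM_le _ (n+4)); [lia|auto])) as [C1 [c' [Dc' _]]].
   destruct (HS3 (incr alpha j) ltac:(apply (leM_le _ (n+4)); [lia|auto])) as [C2 [c2 [Dc2 Bc2]]].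
   assert (IH := IHk ltac:(lia) a' Ha' c' Dc').
   assert (Fl := mi_list_lt n a').
   assert (DU : forall x, inRn n x -> has_partial n l j (c' x) (G x)).
   { intros x Hx. pose proof (DG x Hx) as Gx. unfold Dv in Gx. rewrite L1 in Gx.
     destruct (iter_app _ _ _ _ _ _ Gx) as [H [I1 I2]]. apply iter_one in I2; auto.
     apply (partial_congr n l j H (c' x) (G x) (G x)); auto.
     - exact (iter_uniq n l _ Fl (a x) (a x) H (c' x) I1 (Dc' x Hx) (fun y _ i i' _ _ => eq_refl)).
     - intros y Hy i i' _ _; reflexivity. }
   assert (DV : forall x, inRn n x -> has_partial n l j (G x) (c2 x)).
   { intros x Hx. pose proof (Dc2 x Hx) as Gx. unfold Dv in Gx. rewrite L2 in Gx.
     destruct (iter_app _ _ _ _ _ _ Gx) as [H [I1 I2]]. apply iter_two in I2; auto.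
     destruct I2 as [F1 [P1 P2]].
     assert (E : eqon n l H (c' x)).
     { exact (iter_uniq n l _ Fl (a x) (a x) H (c' x) I1 (Dc' x Hx) (fun y _ i i' _ _ => eq_refl)). }
     assert (E2 : eqon n l F1 (G x)) by (apply (partial_uniq n l j H (c' x)); auto).
     apply (partial_congr n l j F1 (G x) (c2 x) (c2 x)); auto. intros y Hy i i' _ _; reflexivity. }
   assert (BW : forall x xi, inRn n x -> inRn n xi ->
      ebound l (c2 x xi) (C2 * Rpower (jb n xi) ((m - rho * INR k) - 2 * rho))).
   { intros x xi Hx Hxi. apply opnorm_entries. rewrite A2 in Bc2.
     replace (m - rho * INR k - 2 * rho) with (m - rho * INR (S (S k))) by (rewrite !S_INR; ring).
     auto. }
   assert (R := step_analytic n l j c' G c2 (m - rho * INR k) rho C2 Hj Hrho DU DV BW IH eps He).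
   replace (m - rho * INR (S k)) with (m - rho * INR k - rho) by (rewrite S_INR; ring). exact R. Qed.

Theorem mainTheorem14
  (n l mt : nat) (rho delta m tau : R) (M : option nat)
  (a : vec -> vec -> Mat) (ainf : (nat -> nat) -> vec -> Mat) :
  (1 <= l)%nat ->
  0 <= rho <= 1 -> 0 <= delta <= 1 -> 0 < tau < 1 ->
  leM (n + 4) M ->
  symbol_class n l mt tau m rho delta M a ->
  (forall alpha c, (mi_abs n alpha <= n + 3)%nat -> DXi n l alpha a c ->
     forall xi, inRn n xi ->
     forall eps, 0 < eps -> exists R0, forall x, inRn n x -> R0 <= vnorm n x ->
       opnorm_le l (msub (c x xi) (ainf alpha xi)) eps) ->
  (forall eps, 0 < eps -> exists R0, forall x, inRn n x -> R0 <= vnorm n x ->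
     forall xi, inRn n xi ->
       opnorm_le l (msub (a x xi) (ainf mi_zero xi)) (eps * Rpower (jb n xi) m)) ->
  forall alpha c, (mi_abs n alpha <= n + 2)%nat -> DXi n l alpha a c ->
    forall eps, 0 < eps -> exists R0, forall x, inRn n x -> R0 <= vnorm n x ->
      forall xi, inRn n xi ->
        opnorm_le l (msub (c x xi) (ainf alpha xi))
          (eps * Rpower (jb n xi) (m - rho * INR (mi_abs n alpha))).
Proof. intros Hl Hrho Hdelta Htau HM HS H1 H2 alpha c Ha Dc eps He.
 destruct HS as [_ [_ [HS3 _]]].
 destruct n as [|n'].
 { exists 1. intros x Hx Rx. exfalso. unfold vnorm in Rx. simpl in Rx. rewrite sqrt_0 in Rx. lra. }
 set (n := S n') in *.
 assert (Hl' : 0 < INR l) by (apply lt_0_INR; lia).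
 set (e1 := eps / (4 * INR l)). assert (He1 : 0 < e1) by (unfold e1; apply Rdiv_lt_0_compat; lra).
 destruct (cauchy_all n l m rho M a (ainf mi_zero) Hrho HM HS3 H2 (mi_abs n alpha) Ha alpha eq_refl c Dc e1 He1)
   as [R0 HR].
 exists R0. intros x Hx Rx xi Hxi.
 set (w := Rpower (jb n xi) (m - rho * INR (mi_abs n alpha))).
 assert (Hw : 0 < w) by apply Rpower_pos.
 destruct (H1 alpha c ltac:(lia) Dc xi Hxi (e1 * w) ltac:(nra)) as [R1 HR1].
 set (x' := sh (fun _ => 0) (Rmax R0 R1) 0).
 assert (Hx' : inRn n x') by (apply inRn_shift; [intros i _; reflexivity|unfold n; lia]).
 assert (Nx' : vnorm n x' = Rabs (Rmax R0 R1)) by (apply vnorm_e0; unfold n; lia).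
 pose proof (Rle_abs (Rmax R0 R1)). pose proof (Rmax_l R0 R1). pose proof (Rmax_r R0 R1).
 pose proof (HR x x' Hx Hx' Rx ltac:(lra) xi Hxi) as B1.
 pose proof (opnorm_entries _ _ _ (HR1 x' Hx' ltac:(lra))) as B2.
 assert (EB : ebound l (msub (c x xi) (ainf alpha xi)) (2 * e1 * w)).
 { intros i k Hi Hk. destruct (B1 i k Hi Hk) as [a1 b1]. destruct (B2 i k Hi Hk) as [a2 b2].
   simpl in *. fold w in a1, b1. split.
   - eapply Rle_trans; [apply (tri _ _ (fst (c x' xi i k)))|]. lra.
   - eapply Rle_trans; [apply (tri _ _ (snd (c x' xi i k)))|]. lra. }
 pose proof (ebound_opnorm l _ (2 * e1 * w) ltac:(nra) EB) as R.
 replace (eps * w) with (2 * INR l * (2 * e1 * w)) by (unfold e1; field; lra). exact R. Qed.
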